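(* In the biased controlled social learning model described in the context, for all $b_1,b_2\in[0,1]$ with $b_1\le b_2$, $V^*_B(b_1)\le V^*_B(b_2)$.
   Context: A binary state $\omega\in\{G,B\}$ is drawn once. Agents $i=1,2,\dots$ act in sequence; a planner chooses precision $q_i\in[0.5,1]$ and agent $i$ receives a private signal $s_i$ with $\mathbb{P}(s_i=\omega)=q_i$, conditionally independent given $\omega$. Let $y(b,q)=1+2bq-b-q$, $z(b,q)=b+q-2bq$. With public belief $b_i$, agent $i$ takes $a_i=s_i$ if $1-q_i\le b_i\le q_i$, $G$ if $b_i>q_i$, $B$ if $b_i<1-q_i$; the public belief becomes $\frac{q_ib_i}{y(b_i,q_i)}$ (if $s_i=G$) or $\frac{(1-q_i)b_i}{z(b_i,q_i)}$ (if $s_i=B$) when $1-q_i\le b_i\le q_i$, and stays $b_i$ otherwise. The biased planner (who wants action $G$) has baseline $p\in[0.5,1)$, cost $\beta:[0,1]\to[0,\infty)$ non-negative, increasing, continuous, concave with $\beta(0)=0$, $C>0$, and instantaneous reward $r_B(b,q)=-\beta(|q-p|)-C\,\mathbb{P}(a_i=B\mid b,q)$. Policies are deterministic Markov maps $\pi:[0,1]\to[0.5,1]$; for $\delta\in[0,1)$, $V^\pi_B(b)=\mathbb{E}[\sum_{i\ge1}\delta^{i-1}r_B(b_i,\pi(b_i))\mid b_1=b]$ and $V^*_B=\sup_\pi V^\pi_B$. *)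

(* Defs.v *)
From Stdlib Require Import Reals.
From Coquelicot Require Export Coquelicot.
Open Scope R_scope.

(* y(b,q) = P(s = G | public belief b, precision q); z(b,q) = P(s = B | b, q) *)
Definition yf (b q : R) : R := 1 + 2*b*q - b - q.
Definition zf (b q : R) : R := b + q - 2*b*q.

Definition follows (b q : R) : bool :=
  if Rle_dec (1 - q) b then (if Rle_dec b q then true else false) else false.

(* next public belief after signal s (true = G, false = B) *)
Definition next_belief (b q : R) (s : bool) : R :=
  if follows b q then
    (if s then q * b / yf b q else (1 - q) * b / zf b q)
  else b.

(* P(a_i = B | b, q) *)
Definition probB (b q : R) : R :=
  if Rlt_dec q b then 0
  else if Rlt_dec b (1 - q) then 1
  else zf b q.

Definition rB (beta : R -> R) (p C : R) (b q : R) : R :=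
  - beta (Rabs (q - p)) - C * probB b q.

Definition admissible (pi : R -> R) : Prop :=
  forall b, 0 <= b <= 1 -> 1/2 <= pi b <= 1.

(* n-step discounted expected reward, conditional on the true state omega
   (true = G, false = B): signals are independent with P(s_i = omega) = q_i. *)
Fixpoint Wcond (beta : R -> R) (p C delta : R) (pi : R -> R)
    (omega : bool) (n : nat) (b : R) : R :=
  match n with
  | O => 0
  | S m =>
      let q := pi b in
      let pG := if omega then q else 1 - q in
      rB beta p C b q
      + delta * (pG * Wcond beta p C delta pi omega m (next_belief b q true)
                 + (1 - pG) * Wcond beta p C delta pi omega m (next_belief b q false))
  end.

(* E[ sum_{i=1}^{n} delta^(i-1) r_B(b_i, pi b_i) | b_1 = b ], omega ~ Bernoulli(b) *)
Definition Wn (beta : R -> R) (p C delta : R) (pi : R -> R) (n : nat) (b : R) : R :=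
  b * Wcond beta p C delta pi true n b + (1 - b) * Wcond beta p C delta pi false n b.

Definition VB (beta : R -> R) (p C delta : R) (pi : R -> R) (b : R) : R :=
  Lim_seq (fun n => Wn beta p C delta pi n b).

Definition VBstar (beta : R -> R) (p C delta : R) (b : R) : Rbar :=
  Lub_Rbar (fun v => exists pi, admissible pi /\ v = VB beta p C delta pi b).

(* Main.v *)
Require Import Defs.
From Stdlib Require Import Reals Lra Psatz Classical ClassicalEpsilon.
From Coquelicot Require Import Coquelicot.
Open Scope R_scope.

Lemma pow_small (d e : R) : 0 <= d < 1 -> 0 < e -> exists N, forall n, (N <= n)%nat -> d ^ n < e.
Proof.
  intros Hd He. destruct (pow_lt_1_zero d) with (y := e) as [N HN].
  rewrite Rabs_pos_eq; lra. auto.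
  exists N. intros n Hn. specialize (HN n Hn). rewrite Rabs_pos_eq in HN; auto.
  apply pow_le; lra.
Qed.

Lemma geom_small (d a b K : R) : 0 <= d < 1 -> (forall k, a <= b + K * d ^ k) -> a <= b.
Proof.
  intros Hd H. destruct (Rle_dec a b) as [|Hn]; auto. exfalso.
  destruct (Rle_dec K 0) as [HK|HK].
  - specialize (H O). simpl in H. lra.
  - destruct (pow_small d ((a-b)/K) Hd) as [N HN].
    apply Rdiv_lt_0_compat; lra.
    specialize (HN N (Nat.le_refl _)). specialize (H N).
    assert (K * d ^ N < a - b).
    { apply (Rmult_lt_compat_l K) in HN; [|lra].
      replace (K * ((a - b) / K)) with (a-b) in HN by (field; lra). lra. }
    lra.
Qed.

Lemma geom_lim (d K : R) (u : nat -> R) : 0 <= d < 1 -> 0 <= K ->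
  (forall n, Rabs (u (S n) - u n) <= K * d ^ n) ->
  exists l : R, is_lim_seq u l /\ forall n, Rabs (l - u n) <= K * d ^ n / (1 - d).
Proof.
  intros Hd HK Hs.
  assert (tel : forall n k, (1 - d) * Rabs (u (k + n)%nat - u n) <= K * d ^ n * (1 - d ^ k)).
  { intros n k; induction k as [|k IH].
    - simpl. replace (u n - u n) with 0 by ring. rewrite Rabs_R0. lra.
    - replace (S k + n)%nat with (S (k + n)) by lia.
      specialize (Hs (k + n)%nat). rewrite pow_add in Hs.
      assert (Rabs (u (S (k + n)) - u n) <= Rabs (u (S (k + n)) - u (k + n)%nat) + Rabs (u (k + n)%nat - u n)).
      { replace (u (S (k + n)) - u n) with ((u (S (k + n)) - u (k + n)%nat) + (u (k + n)%nat - u n)) by ring.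
        apply Rabs_triang. }
      simpl. assert (0 <= 1 - d) by lra.
      assert (0 <= d ^ n) by (apply pow_le; lra).
      assert (0 <= d ^ k) by (apply pow_le; lra).
      nra. }
  assert (bnd : forall n k, Rabs (u (k + n)%nat - u n) <= K * d ^ n / (1 - d)).
  { intros n k. specialize (tel n k).
    assert (0 <= d ^ n) by (apply pow_le; lra).
    assert (0 <= d ^ k) by (apply pow_le; lra).
    apply Rmult_le_reg_l with (1 - d). lra.
    replace ((1 - d) * (K * d ^ n / (1 - d))) with (K * d ^ n) by (field; lra).
    assert (0 <= K * d ^ n * d ^ k) by (repeat apply Rmult_le_pos; lra). lra. }
  assert (Hc : ex_finite_lim_seq u).
  { apply ex_lim_seq_cauchy_corr. intros eps.
    destruct (pow_small d (eps * (1 - d) / (2 * (K + 1))) Hd) as [N HN].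
    { apply Rdiv_lt_0_compat. apply Rmult_lt_0_compat. apply cond_pos. lra. lra. }
    exists N. intros n m Hn Hm.
    pose proof (bnd N (n - N)%nat) as B1. pose proof (bnd N (m - N)%nat) as B2.
    replace (n - N + N)%nat with n in B1 by lia. replace (m - N + N)%nat with m in B2 by lia.
    specialize (HN N (Nat.le_refl _)).
    assert (K * d ^ N / (1 - d) < eps / 2).
    { assert (0 <= d ^ N) by (apply pow_le; lra).
      apply Rmult_lt_reg_l with (1 - d). lra.
      replace ((1 - d) * (K * d ^ N / (1 - d))) with (K * d ^ N) by (field; lra).
      apply Rmult_lt_compat_l with (r := 2 * (K+1)) in HN; [|lra].
      replace (2 * (K + 1) * (eps * (1 - d) / (2 * (K + 1)))) with (eps * (1-d)) in HN by (field; lra).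
      pose proof (cond_pos eps). nra. }
    replace (u n - u m) with ((u n - u N) - (u m - u N)) by ring.
    eapply Rle_lt_trans. apply Rabs_triang. rewrite Rabs_Ropp. lra. }
  destruct Hc as [l Hl]. exists l. split; auto.
  intros n.
  assert (Hv : is_lim_seq (fun k => Rabs (u (k + n)%nat - u n)) (Rabs (l - u n))).
  { apply (is_lim_seq_abs (fun k => u (k + n)%nat - u n) (l - u n)).
    apply is_lim_seq_minus'. apply is_lim_seq_incr_n. auto. apply is_lim_seq_const. }
  pose proof (is_lim_seq_le _ _ _ _ (bnd n) Hv (is_lim_seq_const (K * d ^ n / (1 - d)))) as H.
  simpl in H. auto.
Qed.

Lemma div_ge (x a c : R) : 0 < c -> x * c <= a -> x <= a / c.
Proof. intros Hc H. apply Rmult_le_reg_r with c; auto.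
  replace (a / c * c) with a by (field; lra). lra. Qed.
Lemma div_le (x a c : R) : 0 < c -> a <= x * c -> a / c <= x.
Proof. intros Hc H. apply Rmult_le_reg_r with c; auto.
  replace (a / c * c) with a by (field; lra). lra. Qed.
Lemma div_cross (a1 c1 a2 c2 : R) : 0 < c1 -> 0 < c2 -> a1 * c2 <= a2 * c1 -> a1 / c1 <= a2 / c2.
Proof. intros H1 H2 H. apply div_ge; auto.
  replace (a1 / c1 * c2) with ((a1 * c2) / c1) by (field; lra). apply div_le; lra. Qed.
Lemma div0 (a : R) : a / 0 = 0.
Proof. unfold Rdiv. rewrite Rinv_0. ring. Qed.

Definition upb (b q : R) := q * b / yf b q.
Definition dnb (b q : R) := (1 - q) * b / zf b q.

Lemma yz1 b q : yf b q + zf b q = 1.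
Proof. unfold yf, zf; ring. Qed.
Lemma y_nn b q : 0 <= b <= 1 -> 0 <= q <= 1 -> 0 <= yf b q.
Proof. intros. unfold yf. nra. Qed.
Lemma z_nn b q : 0 <= b <= 1 -> 0 <= q <= 1 -> 0 <= zf b q.
Proof. intros. unfold zf. nra. Qed.

Lemma up_b0 q : upb 0 q = 0.
Proof. unfold upb. replace (q * 0) with 0 by ring. unfold Rdiv. ring. Qed.
Lemma y_pos b q : 0 < b <= 1 -> 1/2 <= q <= 1 -> 0 < yf b q.
Proof. intros. unfold yf. nra. Qed.
Lemma z_pos b q : 0 <= b <= 1 -> 1/2 <= q < 1 -> 0 < zf b q.
Proof. intros. unfold zf. nra. Qed.
Lemma dn_q1 b : dnb b 1 = 0.
Proof. unfold dnb. replace ((1 - 1) * b) with 0 by ring. unfold Rdiv. ring. Qed.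

Lemma up_range b q : 0 <= b <= 1 -> 1/2 <= q <= 1 -> b <= upb b q <= 1.
Proof.
  intros Hb Hq. destruct (Req_dec b 0) as [->|Hb0].
  - rewrite up_b0. lra.
  - assert (Hy : 0 < yf b q) by (apply y_pos; lra). unfold upb. split.
    + apply div_ge; auto. unfold yf in *.
      assert (0 <= b * (2*q-1) * (1-b)) by (repeat apply Rmult_le_pos; lra). nra.
    + apply div_le; auto. unfold yf in *.
      assert (0 <= (1-b) * (1-q)) by (repeat apply Rmult_le_pos; lra). nra.
Qed.

Lemma dn_range b q : 0 <= b <= 1 -> 1/2 <= q <= 1 -> 0 <= dnb b q <= b.
Proof.
  intros Hb Hq. destruct (Req_dec q 1) as [->|Hq1].
  - rewrite dn_q1. lra.
  - assert (Hz : 0 < zf b q) by (apply z_pos; lra). unfold dnb. split.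
    + apply div_ge; auto. assert (0 <= (1-q) * b) by (apply Rmult_le_pos; lra). nra.
    + apply div_le; auto. unfold zf in *.
      assert (0 <= b * (2*q-1) * (1-b)) by (repeat apply Rmult_le_pos; lra). nra.
Qed.

Lemma up_mono_b b1 b2 q : 0 <= b1 <= 1 -> 0 <= b2 <= 1 -> b1 <= b2 -> 1/2 <= q <= 1 ->
  upb b1 q <= upb b2 q.
Proof.
  intros H1 H2 H12 Hq. destruct (Req_dec b1 0) as [->|Hb0].
  - rewrite up_b0. pose proof (up_range b2 q H2 Hq). lra.
  - assert (0 < yf b1 q) by (apply y_pos; lra).
    assert (0 < yf b2 q) by (apply y_pos; lra).
    unfold upb; apply div_cross; auto.
    unfold yf. replace (q * b2 * (1 + 2 * b1 * q - b1 - q) - q * b1 * (1 + 2 * b2 * q - b2 - q))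
      with (q * (1 - q) * (b2 - b1)) by ring.
    assert (0 <= q * (1 - q) * (b2 - b1)) by (repeat apply Rmult_le_pos; lra).
    nra.
Qed.

Lemma up_mono_q b q1 q2 : 0 <= b <= 1 -> 1/2 <= q1 <= 1 -> 1/2 <= q2 <= 1 -> q1 <= q2 ->
  upb b q1 <= upb b q2.
Proof.
  intros Hb H1 H2 H12. destruct (Req_dec b 0) as [->|Hb0].
  - rewrite !up_b0. lra.
  - assert (0 < yf b q1) by (apply y_pos; lra).
    assert (0 < yf b q2) by (apply y_pos; lra).
    unfold upb; apply div_cross; auto.
    unfold yf.
    assert (0 <= b * (1 - b) * (q2 - q1)) by (repeat apply Rmult_le_pos; lra).
    nra.
Qed.

Lemma dn_mono_b b1 b2 q : 0 <= b1 <= 1 -> 0 <= b2 <= 1 -> b1 <= b2 -> 1/2 <= q <= 1 ->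
  dnb b1 q <= dnb b2 q.
Proof.
  intros H1 H2 H12 Hq. destruct (Req_dec q 1) as [->|Hq1].
  - rewrite !dn_q1. lra.
  - assert (0 < zf b1 q) by (apply z_pos; lra).
    assert (0 < zf b2 q) by (apply z_pos; lra).
    unfold dnb; apply div_cross; auto.
    unfold zf.
    assert (0 <= (1 - q) * q * (b2 - b1)) by (repeat apply Rmult_le_pos; lra).
    nra.
Qed.

Lemma dn_diag x : 1/2 <= x < 1 -> dnb x x = 1/2.
Proof. intros Hx. unfold dnb, zf. field. nra. Qed.

Lemma nb_follow b q s : follows b q = true ->
  next_belief b q s = if s then upb b q else dnb b q.
Proof. intros H. unfold next_belief. rewrite H. reflexivity. Qed.
Lemma nb_nofollow b q s : follows b q = false -> next_belief b q s = b.
Proof. intros H. unfold next_belief. rewrite H. reflexivity. Qed.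

Lemma follows_iff b q : follows b q = true <-> 1 - q <= b <= q.
Proof. unfold follows. destruct (Rle_dec (1-q) b); destruct (Rle_dec b q); split; intros; try lra; try discriminate; auto. Qed.
Lemma follows_false b q : follows b q = false <-> (b < 1 - q \/ q < b).
Proof. unfold follows. destruct (Rle_dec (1-q) b); destruct (Rle_dec b q); split; intros; try lra; try discriminate; auto. Qed.

Lemma nb_range b q s : 0 <= b <= 1 -> 1/2 <= q <= 1 ->
  0 <= next_belief b q s <= 1 /\ next_belief b q false <= b <= next_belief b q true.
Proof.
  intros Hb Hq. destruct (follows b q) eqn:F.
  - rewrite !nb_follow; auto. pose proof (up_range b q Hb Hq). pose proof (dn_range b q Hb Hq).
    destruct s; lra.
  - rewrite !nb_nofollow; auto. lra.
Qed.

Lemma probB_mid b q : 1 - q <= b <= q -> probB b q = zf b q.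
Proof. intros. unfold probB. destruct (Rlt_dec q b); [lra|]. destruct (Rlt_dec b (1-q)); [lra|]. auto. Qed.
Lemma probB_hi b q : q < b -> probB b q = 0.
Proof. intros. unfold probB. destruct (Rlt_dec q b); [auto|lra]. Qed.
Lemma probB_lo b q : 1/2 <= q -> b < 1 - q -> probB b q = 1.
Proof. intros. unfold probB. destruct (Rlt_dec q b); [lra|]. destruct (Rlt_dec b (1-q)); [auto|lra]. Qed.
Lemma probB_range b q : 0 <= b <= 1 -> 1/2 <= q <= 1 -> 0 <= probB b q <= 1.
Proof.
  intros. unfold probB. destruct (Rlt_dec q b); [lra|]. destruct (Rlt_dec b (1-q)); [lra|].
  pose proof (y_nn b q). pose proof (z_nn b q). pose proof (yz1 b q). lra.
Qed.

Lemma lub_fin (E : R -> Prop) (x0 A : R) : E x0 -> (forall x, E x -> x <= A) ->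
  exists s, Lub_Rbar E = Finite s /\ (forall x, E x -> x <= s) /\
    (forall c, (forall x, E x -> x <= c) -> s <= c).
Proof.
  intros H0 HA. destruct (Lub_Rbar_correct E) as [Hub Hl].
  destruct (Lub_Rbar E) as [s| |] eqn:Es.
  - exists s. split; auto. split.
    + intros x Hx. apply (Hub x Hx).
    + intros c Hc. apply (Hl (Finite c)). intros x Hx. apply Hc; auto.
  - exfalso. apply (Hl (Finite A)). intros x Hx. apply HA; auto.
  - exfalso. apply (Hub x0 H0).
Qed.

Section Model.
Variables (beta : R -> R) (p C delta : R).
Hypothesis Hp : 1/2 <= p < 1.
Hypothesis HC : 0 < C.
Hypothesis Hd : 0 <= delta < 1.
Hypothesis Hb0 : beta 0 = 0.
Hypothesis Hbn : forall x, 0 <= x <= 1 -> 0 <= beta x.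
Hypothesis Hbi : forall x y, 0 <= x <= 1 -> 0 <= y <= 1 -> x <= y -> beta x <= beta y.

Definition Mb := beta (1/2) + C.
Definition K0 := Mb / (1 - delta).

Definition Qf (f : R -> R) b q := rB beta p C b q +
  delta * (yf b q * f (next_belief b q true) + zf b q * f (next_belief b q false)).

Lemma beta_bnd q : 1/2 <= q <= 1 -> 0 <= beta (Rabs (q - p)) <= beta (1/2).
Proof.
  intros Hq. assert (0 <= Rabs (q - p) <= 1/2).
  { split. apply Rabs_pos. unfold Rabs; destruct (Rcase_abs (q-p)); lra. }
  split. apply Hbn; lra. apply Hbi; lra.
Qed.

Lemma Mb_nn : 0 <= Mb.
Proof. unfold Mb. pose proof (beta_bnd 1). lra. Qed.
Lemma K0_nn : 0 <= K0.
Proof. unfold K0. pose proof Mb_nn. apply Rmult_le_pos; auto. left; apply Rinv_0_lt_compat; lra. Qed.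
Lemma K0_eq : - Mb + delta * (- K0) = - K0.
Proof. unfold K0. field. lra. Qed.

Lemma rB_bnd b q : 0 <= b <= 1 -> 1/2 <= q <= 1 -> - Mb <= rB beta p C b q <= 0.
Proof.
  intros Hb Hq. unfold rB, Mb. pose proof (beta_bnd q Hq). pose proof (probB_range b q Hb Hq).
  split; nra.
Qed.

Lemma Qf_mono f g e b q : 0 <= b <= 1 -> 1/2 <= q <= 1 ->
  (forall x, 0 <= x <= 1 -> f x <= g x + e) -> Qf f b q <= Qf g b q + delta * e.
Proof.
  intros Hb Hq H. unfold Qf.
  pose proof (H _ (proj1 (nb_range b q true Hb Hq))).
  pose proof (H _ (proj1 (nb_range b q false Hb Hq))).
  pose proof (y_nn b q Hb ltac:(lra)). pose proof (z_nn b q Hb ltac:(lra)). pose proof (yz1 b q).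
  assert (yf b q * f (next_belief b q true) + zf b q * f (next_belief b q false) <=
          yf b q * g (next_belief b q true) + zf b q * g (next_belief b q false) + e) by nra.
  nra.
Qed.

Lemma Qf_ub f A b q : 0 <= b <= 1 -> 1/2 <= q <= 1 ->
  (forall x, 0 <= x <= 1 -> f x <= A) -> Qf f b q <= delta * A.
Proof.
  intros Hb Hq H. unfold Qf.
  pose proof (H _ (proj1 (nb_range b q true Hb Hq))).
  pose proof (H _ (proj1 (nb_range b q false Hb Hq))).
  pose proof (y_nn b q Hb ltac:(lra)). pose proof (z_nn b q Hb ltac:(lra)). pose proof (yz1 b q).
  pose proof (rB_bnd b q Hb Hq).
  assert (yf b q * f (next_belief b q true) + zf b q * f (next_belief b q false) <= A) by nra.
  nra.
Qed.

Lemma Qf_lb f A b q : 0 <= b <= 1 -> 1/2 <= q <= 1 ->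
  (forall x, 0 <= x <= 1 -> A <= f x) -> - Mb + delta * A <= Qf f b q.
Proof.
  intros Hb Hq H. unfold Qf.
  pose proof (H _ (proj1 (nb_range b q true Hb Hq))).
  pose proof (H _ (proj1 (nb_range b q false Hb Hq))).
  pose proof (y_nn b q Hb ltac:(lra)). pose proof (z_nn b q Hb ltac:(lra)). pose proof (yz1 b q).
  pose proof (rB_bnd b q Hb Hq).
  assert (A <= yf b q * f (next_belief b q true) + zf b q * f (next_belief b q false)) by nra.
  nra.
Qed.

Definition T (f : R -> R) (b : R) : R :=
  real (Lub_Rbar (fun v => exists q, 1/2 <= q <= 1 /\ v = Qf f b q)).

Lemma T_props f A b : 0 <= b <= 1 -> (forall x, 0 <= x <= 1 -> f x <= A) ->
  (forall q, 1/2 <= q <= 1 -> Qf f b q <= T f b) /\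
  (forall c, (forall q, 1/2 <= q <= 1 -> Qf f b q <= c) -> T f b <= c).
Proof.
  intros Hb HA.
  destruct (lub_fin (fun v => exists q, 1/2 <= q <= 1 /\ v = Qf f b q) (Qf f b 1) (delta * A))
    as [s [Es [H1 H2]]].
  - exists 1. split; auto; lra.
  - intros x [q [Hq ->]]. apply Qf_ub; auto.
  - unfold T. rewrite Es. simpl. split.
    + intros q Hq. apply H1. exists q; auto.
    + intros c Hc. apply H2. intros x [q [Hq ->]]. auto.
Qed.

Lemma T_approx f A b eta : 0 <= b <= 1 -> (forall x, 0 <= x <= 1 -> f x <= A) -> 0 < eta ->
  exists q, 1/2 <= q <= 1 /\ T f b - eta < Qf f b q.
Proof.
  intros Hb HA He. destruct (T_props f A b Hb HA) as [_ H2].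
  destruct (classic (exists q, 1/2 <= q <= 1 /\ T f b - eta < Qf f b q)) as [H|H]; auto.
  exfalso. assert (T f b <= T f b - eta); [|lra].
  apply H2. intros q Hq. destruct (Rlt_le_dec (T f b - eta) (Qf f b q)); auto.
  exfalso; apply H; exists q; auto.
Qed.

Fixpoint Uit (n : nat) : R -> R :=
  match n with O => fun _ => 0 | S m => T (Uit m) end.

Lemma Uit_bnd n x : 0 <= x <= 1 -> - K0 <= Uit n x <= 0.
Proof.
  revert x; induction n as [|n IH]; intros x Hx; simpl.
  - pose proof K0_nn; lra.
  - assert (HA : forall y, 0 <= y <= 1 -> Uit n y <= 0) by (intros; apply IH; auto).
    destruct (T_props (Uit n) 0 x Hx HA) as [H1 H2]. split.
    + eapply Rle_trans; [|apply (H1 (1/2)); lra]. rewrite <- K0_eq.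
      apply Qf_lb; try lra. intros; apply IH; auto.
    + apply H2. intros q Hq. replace 0 with (delta * 0) by ring. apply Qf_ub; auto.
Qed.

Lemma Uit_step n x : 0 <= x <= 1 -> Uit (S n) x <= Uit n x /\ Uit n x <= Uit (S n) x + K0 * delta ^ n.
Proof.
  revert x; induction n as [|n IH]; intros x Hx.
  - simpl. pose proof (Uit_bnd 1 x Hx). simpl in H. lra.
  - change (Uit (S (S n)) x) with (T (Uit (S n)) x). change (Uit (S n) x) with (T (Uit n) x).
    assert (HA : forall y, 0 <= y <= 1 -> Uit n y <= 0) by (intros; apply Uit_bnd; auto).
    assert (HA' : forall y, 0 <= y <= 1 -> Uit (S n) y <= 0) by (intros; apply Uit_bnd; auto).
    destruct (T_props (Uit n) 0 x Hx HA) as [H1 H2].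
    destruct (T_props (Uit (S n)) 0 x Hx HA') as [H1' H2']. split.
    + apply H2'. intros q Hq. eapply Rle_trans; [|apply (H1 q Hq)].
      replace (Qf (Uit n) x q) with (Qf (Uit n) x q + delta * 0) by ring.
      apply Qf_mono; auto. intros y Hy. destruct (IH y Hy). lra.
    + assert (T (Uit n) x <= T (Uit (S n)) x + delta * (K0 * delta ^ n)).
      { apply H2. intros q Hq. eapply Rle_trans. apply Qf_mono with (g := Uit (S n)) (e := K0 * delta ^ n); auto.
        intros y Hy. destruct (IH y Hy). lra. pose proof (H1' q Hq). lra. }
      change (delta ^ S n) with (delta * delta ^ n).
      replace (K0 * (delta * delta ^ n)) with (delta * (K0 * delta ^ n)) by ring. lra.
Qed.

Definition Ustar (x : R) : R := real (Lim_seq (fun n => Uit n x)).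

Lemma Ustar_lim x : 0 <= x <= 1 ->
  is_lim_seq (fun n => Uit n x) (Ustar x) /\
  (forall n, Rabs (Ustar x - Uit n x) <= K0 * delta ^ n / (1 - delta)).
Proof.
  intros Hx. destruct (geom_lim delta K0 (fun n => Uit n x) Hd K0_nn) as [l [Hl Hb]].
  { intros n. destruct (Uit_step n x Hx). rewrite Rabs_left1; lra. }
  unfold Ustar. rewrite (is_lim_seq_unique _ _ Hl). simpl. auto.
Qed.

Lemma Ustar_bnd x : 0 <= x <= 1 -> - K0 <= Ustar x <= 0.
Proof.
  intros Hx. destruct (Ustar_lim x Hx) as [Hl _]. split.
  - pose proof (is_lim_seq_le _ _ _ _ (fun n => proj1 (Uit_bnd n x Hx)) (is_lim_seq_const _) Hl). auto.
  - pose proof (is_lim_seq_le _ _ _ _ (fun n => proj2 (Uit_bnd n x Hx)) Hl (is_lim_seq_const _)). auto.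
Qed.

Lemma Ustar_near n x : 0 <= x <= 1 ->
  Ustar x <= Uit n x + K0 * delta ^ n / (1 - delta) /\ Uit n x <= Ustar x + K0 * delta ^ n / (1 - delta).
Proof.
  intros Hx. destruct (Ustar_lim x Hx) as [_ H]. specialize (H n).
  unfold Rabs in H. destruct (Rcase_abs (Ustar x - Uit n x)); lra.
Qed.

Lemma Ustar_super b q : 0 <= b <= 1 -> 1/2 <= q <= 1 -> Qf Ustar b q <= Ustar b.
Proof.
  intros Hb Hq.
  apply (geom_small delta _ _ (2 * K0 * delta / (1 - delta)) Hd). intros n.
  assert (HA : forall y, 0 <= y <= 1 -> Uit n y <= 0) by (intros; apply Uit_bnd; auto).
  destruct (T_props (Uit n) 0 b Hb HA) as [H1 _].
  pose proof (Qf_mono Ustar (Uit n) (K0 * delta ^ n / (1 - delta)) b q Hb Hq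
     (fun y Hy => proj1 (Ustar_near n y Hy))).
  pose proof (H1 q Hq). pose proof (proj2 (Ustar_near (S n) b Hb)). change (delta ^ S n) with (delta * delta ^ n) in H2.
  change (T (Uit n) b) with (Uit (S n) b) in H0.
  assert (delta * (K0 * delta ^ n / (1 - delta)) + K0 * (delta * delta ^ n) / (1 - delta)
          = 2 * K0 * delta / (1 - delta) * delta ^ n) by (field; lra).
  lra.
Qed.

Lemma Ustar_approx b eta : 0 <= b <= 1 -> 0 < eta ->
  exists q, 1/2 <= q <= 1 /\ Ustar b - eta < Qf Ustar b q.
Proof.
  intros Hb He.
  destruct (pow_small delta (eta / 2 / (2 * K0 / (1 - delta) + 1)) Hd) as [n Hn].
  { apply Rdiv_lt_0_compat. lra. pose proof K0_nn. assert (0 <= 2 * K0 / (1 - delta)).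
    apply Rmult_le_pos. lra. left; apply Rinv_0_lt_compat; lra. lra. }
  specialize (Hn n (Nat.le_refl _)).
  assert (HA : forall y, 0 <= y <= 1 -> Uit n y <= 0) by (intros; apply Uit_bnd; auto).
  destruct (T_approx (Uit n) 0 b (eta/2) Hb HA) as [q [Hq Hlt]]. lra.
  exists q; split; auto.
  change (T (Uit n) b) with (Uit (S n) b) in Hlt.
  pose proof (Qf_mono (Uit n) Ustar (K0 * delta ^ n / (1 - delta)) b q Hb Hq
     (fun y Hy => proj2 (Ustar_near n y Hy))).
  pose proof (proj1 (Ustar_near (S n) b Hb)). change (delta ^ S n) with (delta * delta ^ n) in H0.
  assert (Hsm : 2 * K0 / (1 - delta) * delta ^ n < eta / 2).
  { pose proof K0_nn. assert (0 <= 2 * K0 / (1 - delta)).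
    apply Rmult_le_pos. lra. left; apply Rinv_0_lt_compat; lra.
    apply Rmult_lt_compat_l with (r := 2 * K0 / (1 - delta) + 1) in Hn; [|lra].
    replace ((2 * K0 / (1 - delta) + 1) * (eta / 2 / (2 * K0 / (1 - delta) + 1))) with (eta/2) in Hn
      by (field; lra).
    assert (0 <= delta ^ n) by (apply pow_le; lra). nra. }
  assert (delta * (K0 * delta ^ n / (1 - delta)) + K0 * (delta * delta ^ n) / (1 - delta)
          = delta * (2 * K0 / (1 - delta) * delta ^ n)) by (field; lra).
  assert (0 <= 2 * K0 / (1 - delta) * delta ^ n).
  { apply Rmult_le_pos. apply Rmult_le_pos. pose proof K0_nn; lra. left; apply Rinv_0_lt_compat; lra.
    apply pow_le; lra. }
  nra.
Qed.



Lemma Qf_nofollow f b q : follows b q = false -> Qf f b q = rB beta p C b q + delta * f b.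
Proof. intros H. unfold Qf. rewrite !nb_nofollow; auto.
  replace (yf b q * f b + zf b q * f b) with ((yf b q + zf b q) * f b) by ring. rewrite yz1. ring. Qed.
Lemma Qf_follow f b q : follows b q = true ->
  Qf f b q = rB beta p C b q + delta * (yf b q * f (upb b q) + zf b q * f (dnb b q)).
Proof. intros H. unfold Qf. rewrite !nb_follow; auto. Qed.

Lemma Ustar_hi b : p < b <= 1 -> 0 <= Ustar b.
Proof.
  intros Hb. assert (Hb' : 0 <= b <= 1) by lra.
  pose proof (Ustar_super b p Hb' ltac:(lra)) as H.
  rewrite Qf_nofollow in H by (apply follows_false; lra).
  unfold rB in H. rewrite probB_hi in H by lra.
  replace (p - p) with 0 in H by ring. rewrite Rabs_R0, Hb0 in H.
  assert ((1 - delta) * Ustar b >= 0) by lra.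
  destruct (Rle_dec 0 (Ustar b)); auto. nra.
Qed.

Lemma Ustar_low q x : 1/2 <= q <= 1 -> 0 <= x <= 1 ->
  - (beta (Rabs (q - p)) + C) / (1 - delta) <= Ustar x.
Proof.
  intros Hq Hx. set (g := - (beta (Rabs (q - p)) + C) / (1 - delta)).
  pose proof (beta_bnd q Hq) as Hbq.
  assert (Hg : g <= 0).
  { unfold g. apply div_le; lra. }
  assert (Hg2 : - beta (Rabs (q - p)) - C + delta * g = g) by (unfold g; field; lra).
  assert (Hk : forall k y, 0 <= y <= 1 -> g - K0 * delta ^ k <= Ustar y).
  { induction k as [|k IH]; intros y Hy.
    - pose proof (Ustar_bnd y Hy). simpl. lra.
    - pose proof (Ustar_super y q Hy Hq) as H. unfold Qf in H.
      pose proof (IH _ (proj1 (nb_range y q true Hy Hq))).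
      pose proof (IH _ (proj1 (nb_range y q false Hy Hq))).
      pose proof (y_nn y q Hy ltac:(lra)). pose proof (z_nn y q Hy ltac:(lra)). pose proof (yz1 y q).
      pose proof (probB_range y q Hy Hq). unfold rB in H.
      assert (g - K0 * delta ^ k <= yf y q * Ustar (next_belief y q true) + zf y q * Ustar (next_belief y q false)) by nra.
      change (delta ^ S k) with (delta * delta ^ k). nra. }
  apply (geom_small delta _ _ K0 Hd). intros k. specialize (Hk k x Hx). lra.
Qed.

Lemma coupling (c y1 z1 y2 z2 u1 d1 u2 d2 : R) :
  (forall x x', 0 <= x <= 1 -> 0 <= x' <= 1 -> x <= x' -> Ustar x - Ustar x' <= c) ->
  0 <= y1 -> 0 <= z2 -> y1 <= y2 -> y1 + z1 = 1 -> y2 + z2 = 1 ->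
  0 <= u1 <= 1 -> 0 <= u2 <= 1 -> 0 <= d1 <= 1 -> 0 <= d2 <= 1 ->
  u1 <= u2 -> d1 <= d2 -> d1 <= u2 ->
  y1 * Ustar u1 + z1 * Ustar d1 - (y2 * Ustar u2 + z2 * Ustar d2) <= c.
Proof.
  intros Hc. intros.
  pose proof (Hc u1 u2 ltac:(auto) ltac:(auto) ltac:(auto)).
  pose proof (Hc d1 d2 ltac:(auto) ltac:(auto) ltac:(auto)).
  pose proof (Hc d1 u2 ltac:(auto) ltac:(auto) ltac:(auto)).
  replace (y1 * Ustar u1 + z1 * Ustar d1 - (y2 * Ustar u2 + z2 * Ustar d2)) with
    (y1 * (Ustar u1 - Ustar u2) + z2 * (Ustar d1 - Ustar d2) + (z1 - z2) * (Ustar d1 - Ustar u2))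
    by (replace z1 with (1 - y1) by lra; replace z2 with (1 - y2) by lra; ring).
  assert (y1 * (Ustar u1 - Ustar u2) <= y1 * c) by (apply Rmult_le_compat_l; lra).
  assert (z2 * (Ustar d1 - Ustar d2) <= z2 * c) by (apply Rmult_le_compat_l; lra).
  assert ((z1 - z2) * (Ustar d1 - Ustar u2) <= (z1 - z2) * c) by (apply Rmult_le_compat_l; lra).
  nra.
Qed.

Lemma mono_step c eta b1 b2 : 0 <= c -> 0 < eta ->
  (forall x x', 0 <= x <= 1 -> 0 <= x' <= 1 -> x <= x' -> Ustar x - Ustar x' <= c) ->
  0 <= b1 <= 1 -> 0 <= b2 <= 1 -> b1 <= b2 ->
  Ustar b1 - Ustar b2 <= delta * c + eta / (1 - delta).
Proof.
  intros Hc0 He Hc Hb1 Hb2 H12.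
  assert (Heta : eta <= eta / (1 - delta)).
  { apply div_ge; [lra|]. nra. }
  assert (Hdc : 0 <= delta * c) by nra.
  destruct (Ustar_approx b1 eta Hb1 He) as [q [Hq Hlt]].
  pose proof (beta_bnd q Hq) as Hbq.
  destruct (follows b1 q) eqn:F1.
  - apply follows_iff in F1.
    destruct (Rle_dec b2 q) as [Hb2q|Hb2q].
    + assert (F2 : follows b2 q = true) by (apply follows_iff; lra).
      pose proof (Ustar_super b2 q Hb2 Hq) as Hs.
      rewrite Qf_follow in Hlt by (apply follows_iff; lra). rewrite Qf_follow in Hs by auto.
      assert (Hr : rB beta p C b1 q <= rB beta p C b2 q).
      { unfold rB. rewrite !probB_mid by lra. unfold zf.
        assert (0 <= C * ((b2 - b1) * (2*q - 1))) by (apply Rmult_le_pos; [lra|apply Rmult_le_pos; lra]).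
        nra. }
      assert (Hcp : yf b1 q * Ustar (upb b1 q) + zf b1 q * Ustar (dnb b1 q) -
               (yf b2 q * Ustar (upb b2 q) + zf b2 q * Ustar (dnb b2 q)) <= c).
      { pose proof (up_range b1 q Hb1 Hq). pose proof (up_range b2 q Hb2 Hq).
        pose proof (dn_range b1 q Hb1 Hq). pose proof (dn_range b2 q Hb2 Hq).
        pose proof (y_nn b1 q Hb1 ltac:(lra)). pose proof (z_nn b2 q Hb2 ltac:(lra)).
        assert (yf b1 q <= yf b2 q).
        { unfold yf. assert (0 <= (b2 - b1) * (2*q - 1)) by (apply Rmult_le_pos; lra). nra. }
        pose proof (yz1 b1 q). pose proof (yz1 b2 q).
        pose proof (up_mono_b b1 b2 q Hb1 Hb2 H12 Hq). pose proof (dn_mono_b b1 b2 q Hb1 Hb2 H12 Hq).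
        apply coupling; auto; lra. }
      nra.
    + destruct (Rlt_le_dec p b2) as [Hpb|Hpb].
      * pose proof (Ustar_hi b2 ltac:(lra)). pose proof (Ustar_bnd b1 Hb1). lra.
      * assert (Hq2 : 1/2 <= b2 <= 1) by lra.
        assert (F2 : follows b2 b2 = true) by (apply follows_iff; lra).
        pose proof (Ustar_super b2 b2 Hb2 Hq2) as Hs.
        rewrite Qf_follow in Hlt by (apply follows_iff; lra). rewrite Qf_follow in Hs by auto.
        assert (Hbb : beta (Rabs (b2 - p)) <= beta (Rabs (q - p))).
        { rewrite !Rabs_left1 by lra. apply Hbi; lra. }
        assert (Hr : rB beta p C b1 q <= rB beta p C b2 b2).
        { unfold rB. rewrite !probB_mid by lra.
          assert (zf b2 b2 <= zf b1 q).
          { unfold zf. assert (0 <= (b2 - q) * (q + b2 - 1)) by (apply Rmult_le_pos; lra).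
            assert (0 <= (q - b1) * (2 * q - 1)) by (apply Rmult_le_pos; lra). nra. }
          assert (C * zf b2 b2 <= C * zf b1 q) by (apply Rmult_le_compat_l; lra). lra. }
        assert (Hcp : yf b1 q * Ustar (upb b1 q) + zf b1 q * Ustar (dnb b1 q) -
               (yf b2 b2 * Ustar (upb b2 b2) + zf b2 b2 * Ustar (dnb b2 b2)) <= c).
        { pose proof (up_range b1 q Hb1 Hq). pose proof (up_range b2 b2 Hb2 Hq2).
          pose proof (dn_range b1 q Hb1 Hq). pose proof (dn_range b2 b2 Hb2 Hq2).
          assert (upb b1 q <= upb b2 b2).
          { eapply Rle_trans. apply (up_mono_b b1 b2 q); auto. apply up_mono_q; lra. }
          assert (dnb b1 q <= dnb b2 b2).
          { rewrite (dn_diag b2) by lra. rewrite <- (dn_diag q) by lra. apply dn_mono_b; lra. }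
          pose proof (y_nn b1 q Hb1 ltac:(lra)). pose proof (z_nn b2 b2 Hb2 ltac:(lra)).
          assert (yf b1 q <= yf b2 b2).
          { unfold yf. assert (0 <= (b2 - q) * (q + b2 - 1)) by (apply Rmult_le_pos; lra).
            assert (0 <= (q - b1) * (2 * q - 1)) by (apply Rmult_le_pos; lra). nra. }
          pose proof (yz1 b1 q). pose proof (yz1 b2 b2).
          apply coupling; auto; lra. }
        nra.
  - apply follows_false in F1. destruct F1 as [Hlo|Hhi].
    + rewrite Qf_nofollow in Hlt by (apply follows_false; lra).
      unfold rB in Hlt. rewrite probB_lo in Hlt by lra.
      pose proof (Ustar_low q b2 Hq Hb2) as Hl.
      assert (Hm : (1 - delta) * (Ustar b1 - Ustar b2) < eta).
      { assert ((1 - delta) * (- (beta (Rabs (q - p)) + C) / (1 - delta)) = - (beta (Rabs (q - p)) + C))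
          by (field; lra).
        assert ((1 - delta) * (- (beta (Rabs (q - p)) + C) / (1 - delta)) <= (1 - delta) * Ustar b2)
          by (apply Rmult_le_compat_l; lra).
        nra. }
      assert (Ustar b1 - Ustar b2 <= eta / (1 - delta)).
      { apply div_ge; [lra|]. nra. }
      lra.
    + assert (F2 : follows b2 q = false) by (apply follows_false; lra).
      pose proof (Ustar_super b2 q Hb2 Hq) as Hs.
      rewrite Qf_nofollow in Hlt by (apply follows_false; lra). rewrite Qf_nofollow in Hs by auto.
      unfold rB in Hlt, Hs. rewrite probB_hi in Hlt by lra. rewrite probB_hi in Hs by lra.
      pose proof (Hc b1 b2 Hb1 Hb2 H12).
      assert (delta * (Ustar b1 - Ustar b2) <= delta * c) by (apply Rmult_le_compat_l; lra).
      nra.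
Qed.

Lemma Ustar_mono b1 b2 : 0 <= b1 <= 1 -> 0 <= b2 <= 1 -> b1 <= b2 -> Ustar b1 <= Ustar b2.
Proof.
  intros Hb1 Hb2 H12.
  assert (Hall : forall eta, 0 < eta -> Ustar b1 - Ustar b2 <= eta / ((1 - delta) * (1 - delta))).
  { intros eta He. set (E := eta / ((1 - delta) * (1 - delta))).
    assert (HE : 0 <= E) by (unfold E; apply Rlt_le, Rdiv_lt_0_compat; nra).
    assert (HEq : delta * E + eta / (1 - delta) = E) by (unfold E; field; lra).
    assert (Hk : forall k x x', 0 <= x <= 1 -> 0 <= x' <= 1 -> x <= x' ->
               Ustar x - Ustar x' <= K0 * delta ^ k + E).
    { induction k as [|k IH]; intros x x' Hx Hx' Hxx.
      - pose proof (Ustar_bnd x Hx). pose proof (Ustar_bnd x' Hx'). simpl. lra.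
      - assert (0 <= K0 * delta ^ k) by (apply Rmult_le_pos; [apply K0_nn|apply pow_le; lra]).
        pose proof (mono_step (K0 * delta ^ k + E) eta x x' ltac:(lra) He IH Hx Hx' Hxx).
        change (delta ^ S k) with (delta * delta ^ k). nra. }
    apply (geom_small delta _ _ K0 Hd). intros k. specialize (Hk k b1 b2 Hb1 Hb2 H12). lra. }
  destruct (Rle_dec (Ustar b1) (Ustar b2)) as [|Hn]; auto. exfalso.
  set (D := Ustar b1 - Ustar b2).
  assert (HD : 0 < D) by (unfold D; lra).
  assert (Hpos : 0 < (1 - delta) * (1 - delta)) by nra.
  specialize (Hall (D * ((1 - delta) * (1 - delta)) / 2)).
  replace (D * ((1 - delta) * (1 - delta)) / 2 / ((1 - delta) * (1 - delta))) with (D / 2) in Hall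
    by (field; lra).
  assert (D <= D / 2). apply Hall. apply Rdiv_lt_0_compat; nra. lra.
Qed.

Lemma yu_fact b q : 0 <= b <= 1 -> 1/2 <= q <= 1 -> yf b q * upb b q = q * b.
Proof.
  intros Hb Hq. destruct (Req_dec b 0) as [->|Hbz].
  - rewrite up_b0. ring.
  - assert (0 < yf b q) by (apply y_pos; lra). unfold upb. field. lra.
Qed.
Lemma zd_fact b q : 0 <= b <= 1 -> 1/2 <= q <= 1 -> zf b q * dnb b q = (1 - q) * b.
Proof.
  intros Hb Hq. destruct (Req_dec q 1) as [->|Hq1].
  - rewrite dn_q1. ring.
  - assert (0 < zf b q) by (apply z_pos; lra). unfold dnb. field. lra.
Qed.

Lemma W_rec pi m b : 0 <= b <= 1 -> 1/2 <= pi b <= 1 ->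
  Wn beta p C delta pi (S m) b = Qf (Wn beta p C delta pi m) b (pi b).
Proof.
  intros Hb Hq. unfold Wn, Qf. simpl.
  set (q := pi b) in *.
  set (WT := Wcond beta p C delta pi true m). set (WF := Wcond beta p C delta pi false m).
  destruct (follows b q) eqn:F.
  - rewrite !nb_follow by auto.
    pose proof (yu_fact b q Hb Hq). pose proof (zd_fact b q Hb Hq).
    pose proof (yz1 b q).
    set (u := upb b q) in *. set (d := dnb b q) in *.
    replace (yf b q * (u * WT u + (1 - u) * WF u) + zf b q * (d * WT d + (1 - d) * WF d))
      with ((yf b q * u) * WT u + (yf b q - yf b q * u) * WF u + (zf b q * d) * WT d + (zf b q - zf b q * d) * WF d)
      by ring.
    rewrite H, H0. replace (zf b q) with (1 - yf b q) by lra. unfold yf. ring.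
  - rewrite !nb_nofollow by auto.
    pose proof (yz1 b q). replace (zf b q) with (1 - yf b q) by lra. ring.
Qed.

Lemma W0 pi b : Wn beta p C delta pi 0 b = 0.
Proof. unfold Wn. simpl. ring. Qed.

Definition admissible' (pi : R -> R) := forall b, 0 <= b <= 1 -> 1/2 <= pi b <= 1.

Lemma W_conv pi b : admissible pi -> 0 <= b <= 1 ->
  exists l : R, is_lim_seq (fun n => Wn beta p C delta pi n b) l /\
    forall n, Rabs (l - Wn beta p C delta pi n b) <= Mb * delta ^ n / (1 - delta).
Proof.
  intros Ha Hb. apply geom_lim; auto. apply Mb_nn.
  intros n. revert b Hb. induction n as [|n IH]; intros x Hx.
  - rewrite W_rec by (auto; apply Ha; auto). unfold Qf. rewrite !W0.
    pose proof (rB_bnd x (pi x) Hx (Ha x Hx)). simpl.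
    rewrite Rabs_left1; lra.
  - rewrite (W_rec pi (S n)) by (auto; apply Ha; auto). rewrite (W_rec pi n) by (auto; apply Ha; auto).
    assert (H1 := Qf_mono (Wn beta p C delta pi (S n)) (Wn beta p C delta pi n) (Mb * delta ^ n) x (pi x) Hx (Ha x Hx)).
    assert (H2 := Qf_mono (Wn beta p C delta pi n) (Wn beta p C delta pi (S n)) (Mb * delta ^ n) x (pi x) Hx (Ha x Hx)).
    assert (forall y, 0 <= y <= 1 -> Wn beta p C delta pi (S n) y <= Wn beta p C delta pi n y + Mb * delta ^ n).
    { intros y Hy. specialize (IH y Hy). unfold Rabs in IH. destruct (Rcase_abs _); lra. }
    assert (forall y, 0 <= y <= 1 -> Wn beta p C delta pi n y <= Wn beta p C delta pi (S n) y + Mb * delta ^ n).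
    { intros y Hy. specialize (IH y Hy). unfold Rabs in IH. destruct (Rcase_abs _); lra. }
    specialize (H1 H). specialize (H2 H0).
    change (delta ^ S n) with (delta * delta ^ n).
    unfold Rabs. destruct (Rcase_abs _); nra.
Qed.

Lemma VB_le pi b : admissible pi -> 0 <= b <= 1 -> VB beta p C delta pi b <= Ustar b.
Proof.
  intros Ha Hb. destruct (W_conv pi b Ha Hb) as [l [Hl Hr]].
  unfold VB. rewrite (is_lim_seq_unique _ _ Hl). simpl.
  assert (Hw : forall n x, 0 <= x <= 1 -> Wn beta p C delta pi n x <= Ustar x + K0 * delta ^ n).
  { induction n as [|n IH]; intros x Hx.
    - rewrite W0. pose proof (Ustar_bnd x Hx). simpl. lra.
    - rewrite W_rec by (auto; apply Ha; auto).
      pose proof (Qf_mono _ _ (K0 * delta ^ n) x (pi x) Hx (Ha x Hx) IH).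
      pose proof (Ustar_super x (pi x) Hx (Ha x Hx)).
      change (delta ^ S n) with (delta * delta ^ n). nra. }
  apply (geom_small delta _ _ (K0 + Mb / (1 - delta)) Hd). intros n.
  specialize (Hw n b Hb). specialize (Hr n).
  assert (Mb * delta ^ n / (1 - delta) = Mb / (1 - delta) * delta ^ n) by (field; lra).
  unfold Rabs in Hr. destruct (Rcase_abs _); nra.
Qed.

Lemma VB_ge b eta : 0 <= b <= 1 -> 0 < eta ->
  exists pi, admissible pi /\ Ustar b - eta <= VB beta p C delta pi b.
Proof.
  intros Hb He.
  assert (Hex : forall x, exists q, 1/2 <= q <= 1 /\ (0 <= x <= 1 -> Ustar x - eta * (1 - delta) < Qf Ustar x q)).
  { intros x. destruct (classic (0 <= x <= 1)) as [Hx|Hx].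
    - destruct (Ustar_approx x (eta * (1 - delta)) Hx) as [q [Hq Hlt]]. nra.
      exists q; auto.
    - exists (1/2). split. lra. intros; contradiction. }
  set (pi := fun x => proj1_sig (constructive_indefinite_description _ (Hex x))).
  assert (Hpi : forall x, 1/2 <= pi x <= 1 /\ (0 <= x <= 1 -> Ustar x - eta * (1 - delta) < Qf Ustar x (pi x))).
  { intros x. unfold pi. destruct (constructive_indefinite_description _ (Hex x)). simpl. auto. }
  assert (Ha : admissible pi) by (intros x _; apply Hpi).
  exists pi. split; auto.
  destruct (W_conv pi b Ha Hb) as [l [Hl Hr]].
  unfold VB. rewrite (is_lim_seq_unique _ _ Hl). simpl.
  assert (Hw : forall n x, 0 <= x <= 1 -> Ustar x - eta - K0 * delta ^ n <= Wn beta p C delta pi n x).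
  { induction n as [|n IH]; intros x Hx.
    - rewrite W0. pose proof (Ustar_bnd x Hx). simpl. lra.
    - rewrite W_rec by (auto; apply Ha; auto).
      assert (IH' : forall y, 0 <= y <= 1 -> Ustar y <= Wn beta p C delta pi n y + (eta + K0 * delta ^ n)).
      { intros y Hy. specialize (IH y Hy). lra. }
      pose proof (Qf_mono _ _ _ x (pi x) Hx (Ha x Hx) IH').
      pose proof (proj2 (Hpi x) Hx).
      change (delta ^ S n) with (delta * delta ^ n). nra. }
  apply (geom_small delta _ _ (K0 + Mb / (1 - delta)) Hd). intros n.
  specialize (Hw n b Hb). specialize (Hr n).
  assert (Mb * delta ^ n / (1 - delta) = Mb / (1 - delta) * delta ^ n) by (field; lra).
  unfold Rabs in Hr. destruct (Rcase_abs _); nra.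
Qed.

Lemma VBstar_eq b : 0 <= b <= 1 -> VBstar beta p C delta b = Finite (Ustar b).
Proof.
  intros Hb. unfold VBstar. apply is_lub_Rbar_unique. split.
  - intros v [pi [Ha ->]]. simpl. apply VB_le; auto.
  - intros l Hl. destruct l as [r| |]; simpl; auto.
    + apply Rnot_lt_le. intros Hlt.
      destruct (VB_ge b ((Ustar b - r) / 2) Hb ltac:(lra)) as [pi [Ha Hge]].
      specialize (Hl _ (ex_intro _ pi (conj Ha eq_refl))). simpl in Hl. lra.
    + destruct (VB_ge b 1 Hb ltac:(lra)) as [pi [Ha Hge]].
      apply (Hl _ (ex_intro _ pi (conj Ha eq_refl))).
Qed.

Lemma final b1 b2 : 0 <= b1 <= 1 -> 0 <= b2 <= 1 -> b1 <= b2 ->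
  Rbar_le (VBstar beta p C delta b1) (VBstar beta p C delta b2).
Proof.
  intros H1 H2 H12. rewrite !VBstar_eq by auto. simpl. apply Ustar_mono; auto.
Qed.

End Model.

Theorem lemma15
  (beta : R -> R) (p C delta : R)
  (Hp : 1/2 <= p < 1)
  (HC : 0 < C)
  (Hdelta : 0 <= delta < 1)
  (Hbeta0 : beta 0 = 0)
  (Hbeta_nonneg : forall x, 0 <= x <= 1 -> 0 <= beta x)
  (Hbeta_incr : forall x y, 0 <= x <= 1 -> 0 <= y <= 1 -> x <= y -> beta x <= beta y)
  (Hbeta_cont : forall x, 0 <= x <= 1 -> forall eps, 0 < eps ->
      exists d, 0 < d /\ forall y, 0 <= y <= 1 -> Rabs (y - x) < d ->
        Rabs (beta y - beta x) < eps)
  (Hbeta_conc : forall x y t, 0 <= x <= 1 -> 0 <= y <= 1 -> 0 <= t <= 1 ->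
      t * beta x + (1 - t) * beta y <= beta (t * x + (1 - t) * y))
  (b1 b2 : R) (Hb1 : 0 <= b1 <= 1) (Hb2 : 0 <= b2 <= 1) (H12 : b1 <= b2) :
  Rbar_le (VBstar beta p C delta b1) (VBstar beta p C delta b2).
Proof.
  eapply final; eauto.
Qed.
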